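(* Let $\lambda_1,\lambda_2,\lambda_3\in\mathbb{R}$ with $0<\lambda_2<(2+2\sqrt2)\lambda_1$ and $\lambda_3>0$. Then $(z_1,z_2)=(0,0)$ is the only real solution of the system $$\lambda_1z_1+\lambda_3(z_1-z_2)+\lambda_2\frac{z_1^2(z_1-1)}{1+z_1^2}=0,\qquad \lambda_1z_2+\lambda_3(z_2-z_1)+\lambda_2\frac{z_2^2(z_2-1)}{1+z_2^2}=0.$$ *)

(* Defs.v *)
From Stdlib Require Import Reals.
Open Scope R_scope.

Definition F1 (l1 l2 l3 z1 z2 : R) : R :=
  l1 * z1 + l3 * (z1 - z2) + l2 * (z1 ^ 2 * (z1 - 1) / (1 + z1 ^ 2)).
Definition F2 (l1 l2 l3 z1 z2 : R) : R :=
  l1 * z2 + l3 * (z2 - z1) + l2 * (z2 ^ 2 * (z2 - 1) / (1 + z2 ^ 2)).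

(* Main.v *)
Require Import Defs.
From Stdlib Require Import Reals Lra Psatz.
Open Scope R_scope.

Lemma Ppos (l1 l2 z : R) : 0 < l2 -> l2 < (2 + 2 * sqrt 2) * l1 ->
  0 < l1 * (1 + z^2) + l2 * (z^2 - z).
Proof.
  intros h2 h21.
  assert (hs : sqrt 2 * sqrt 2 = 2) by (apply sqrt_sqrt; lra).
  assert (hs1 : 1 < sqrt 2).
  { rewrite <- sqrt_1 at 1. apply sqrt_lt_1_alt. lra. }
  revert h21 hs hs1. generalize (sqrt 2). intros s h21 hs hs1.
  assert (hl : 2 * l1 + l2 > s * l2).
  { assert ((s-1)*l2 < (s-1)*((2+2*s)*l1)) by (apply Rmult_lt_compat_l; lra).
    assert (e : (s-1)*((2+2*s)*l1) = 2*(s*s)*l1 - 2*l1) by ring.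
    rewrite hs in e. lra. }
  assert (0 < (s-1)*l2) by (apply Rmult_lt_0_compat; lra).
  assert (hl1 : 0 < l1) by nra.
  assert (hd : 0 < 4*l1*l1 + 4*l1*l2 - l2*l2).
  { assert (0 < (2*l1+l2-s*l2)*(2*l1+l2+s*l2)) by (apply Rmult_lt_0_compat; nra).
    assert (e : (2*l1+l2-s*l2)*(2*l1+l2+s*l2) = 4*l1*l1 + 4*l1*l2 + l2*l2 - (s*s)*l2*l2) by ring.
    rewrite hs in e. lra. }
  assert (e : 4*(l1+l2)*(l1 * (1 + z^2) + l2 * (z^2 - z)) = (2*(l1+l2)*z - l2)^2 + (4*l1*l1 + 4*l1*l2 - l2*l2)) by ring.
  assert (0 <= (2*(l1+l2)*z - l2)^2) by (apply pow2_ge_0).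
  destruct (Rle_lt_dec (l1 * (1 + z^2) + l2 * (z^2 - z)) 0); [|assumption].
  assert (4*(l1+l2)*(l1 * (1 + z^2) + l2 * (z^2 - z)) <= 0).
  { assert (0 < 4*(l1+l2)) by lra. nra. }
  lra.
Qed.

Lemma fsign (l1 l2 z : R) : 0 < l2 -> l2 < (2 + 2 * sqrt 2) * l1 ->
  l1 * z + l2 * (z ^ 2 * (z - 1) / (1 + z ^ 2)) = z * (l1 * (1 + z^2) + l2 * (z^2 - z)) / (1 + z^2).
Proof. intros. field. nra. Qed.

Lemma fpos (l1 l2 z : R) : 0 < l2 -> l2 < (2 + 2 * sqrt 2) * l1 -> 0 < z ->
  0 < l1 * z + l2 * (z ^ 2 * (z - 1) / (1 + z ^ 2)).
Proof.
  intros h2 h21 hz. rewrite fsign by assumption.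
  pose proof (Ppos l1 l2 z h2 h21).
  apply Rdiv_lt_0_compat; nra.
Qed.

Lemma fneg (l1 l2 z : R) : 0 < l2 -> l2 < (2 + 2 * sqrt 2) * l1 -> z < 0 ->
  l1 * z + l2 * (z ^ 2 * (z - 1) / (1 + z ^ 2)) < 0.
Proof.
  intros h2 h21 hz. rewrite fsign by assumption.
  pose proof (Ppos l1 l2 z h2 h21).
  assert (0 < 1 + z^2) by nra.
  unfold Rdiv. assert (0 < / (1+z^2)) by (apply Rinv_0_lt_compat; lra).
  assert (z * (l1 * (1 + z ^ 2) + l2 * (z ^ 2 - z)) < 0) by nra.
  nra.
Qed.

Lemma core (fa fb a b l3 : R) : 0 < l3 -> fa + l3 * (a - b) = 0 -> fb + l3 * (b - a) = 0 ->
  (0 < a -> 0 < fa) -> (a < 0 -> fa < 0) -> (a = 0 -> fa = 0) ->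
  (0 < b -> 0 < fb) -> (b < 0 -> fb < 0) -> (b = 0 -> fb = 0) -> a = 0 /\ b = 0.
Proof.
  intros h3 Ea Eb pa na za pb nb zb.
  destruct (Rtotal_order a 0) as [A|[A|A]];
  destruct (Rtotal_order b 0) as [B|[B|B]];
  try (split; assumption);
  try specialize (na A); try specialize (za A); try specialize (pa A);
  try specialize (nb B); try specialize (zb B); try specialize (pb B);
  exfalso; nra.
Qed.

Theorem lemmaF3 (l1 l2 l3 : R)
  (h2 : 0 < l2) (h21 : l2 < (2 + 2 * sqrt 2) * l1) (h3 : 0 < l3) :
  F1 l1 l2 l3 0 0 = 0 /\ F2 l1 l2 l3 0 0 = 0 /\
  (forall z1 z2 : R, F1 l1 l2 l3 z1 z2 = 0 -> F2 l1 l2 l3 z1 z2 = 0 ->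
     z1 = 0 /\ z2 = 0).
Proof.
  unfold F1, F2.
  split; [|split].
  - unfold Rdiv. ring.
  - unfold Rdiv. ring.
  - intros a b E1 E2.
    apply (core (l1 * a + l2 * (a ^ 2 * (a - 1) / (1 + a ^ 2)))
                (l1 * b + l2 * (b ^ 2 * (b - 1) / (1 + b ^ 2))) a b l3 h3);
      try lra;
      try (intro; apply fpos; assumption);
      try (intro; apply fneg; assumption);
      intro Z; subst; unfold Rdiv; ring.
Qed.
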